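(* For any irrevocable (non-wasteful) distribution policy $\varphi$, when the characteristic functions range over $V_{\ge3}$, the competitive ratio of $\varphi$ with respect to greedy players is at most $\frac{3\mathsf{min}}{\mathsf{max}}$.
   Context: Players: a finite set $N=\{a_1,\dots,a_n\}$. A characteristic function is $v:2^N\to\mathbb{R}_{\ge 0}$ with $v(\emptyset)=0$. There are fixed, known constants $0<\mathsf{min}\le\mathsf{max}$ and every $v$ considered is monotone and bounded: $\mathsf{min}\le v(S)\le v(T)\le\mathsf{max}$ for all nonempty $S\subseteq T\subseteq N$. For an integer $\delta\ge1$, $V_\delta$ denotes the set of such $v$ with $\delta\cdot\mathsf{min}\le\mathsf{max}<(\delta+1)\cdot\mathsf{min}$, and $V_{\ge3}=\bigcup_{\delta\ge3}V_\delta$. A coalition structure is a partition $C$ of $N$; its social welfare is $\mathsf{SW}(C\mid v)=\sum_{S\in C}v(S)$. Online process: an arrival order is a permutation $\pi=(\pi_1,\dots,\pi_n)$ of $N$; player $\pi_t$ arrives at time $t$. For $S\subseteq N$, $\pi_{|S}$ denotes the players of $S$ in the relative order of $\pi$; $\pi_{|S}$ is a prefix of $\pi_{|T}$ if $S\subseteq T$ and the players of $S$ are the first $|S|$ players of $\pi_{|T}$. Let $C^{t-1}$ be the coalition structure of players arrived before time $t$ ($C^0=\emptyset$). At time $t$, player $\pi_t$ either joins an existing coalition $S\in C^{t-1}$ or forms $\{\pi_t\}$ (choice $S=\emptyset$); decisions are never revised. A distribution policy $\varphi$ assigns to every $S\subseteq N$ and order $\pi_{|S}$ a vector $(\varphi_i(S,\pi_{|S}\mid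 v))_{i\in S}$ with $\sum_{i\in S}\varphi_i(S,\pi_{|S})=v(S)$ (non-wasteful). It is irrevocable if for every $\pi$, every $S\subseteq T\subseteq N$ with $\pi_{|S}$ a prefix of $\pi_{|T}$ and every $i\in S$, $\varphi_i(S,\pi_{|S})\le\varphi_i(T,\pi_{|T})$. Greedy players: $\pi_t$ chooses $S^*\in\arg\max_{S\in C^{t-1}\cup\{\emptyset\}}\varphi_{\pi_t}(S\cup\{\pi_t\},\pi_{|S\cup\{\pi_t\}})$ (predetermined tie-breaking). $C_g(v,\pi\mid\varphi)$ is the final structure. The competitive ratio over a class of characteristic functions is $\alpha=\inf_{v,\pi}\mathsf{SW}(C_g(v,\pi\mid\varphi))/\max_C\mathsf{SW}(C\mid v)$, over $v$ in the class (and any number of players) and all arrival orders $\pi$. *)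

(* Defs.v *)
From HB Require Import structures.
From mathcomp Require Import all_boot all_order all_algebra.
From mathcomp Require Import reals.
Set Implicit Arguments. Unset Strict Implicit. Unset Printing Implicit Defensive.
Import Order.TTheory GRing.Theory Num.Theory.
Local Open Scope ring_scope.

Definition arrival_order (n : nat) (pi : seq 'I_n) : bool :=
  perm_eq pi (enum 'I_n).

Definition restr (n : nat) (pi : seq 'I_n) (S : {set 'I_n}) : seq 'I_n :=
  [seq x <- pi | x \in S].

Definition mono_bounded (R : realType) (mn mx : R) (n : nat)
    (v : {set 'I_n} -> R) : Prop :=
  v set0 = 0 /\
  forall S T : {set 'I_n}, S != set0 -> S \subset T ->
    mn <= v S /\ v S <= v T /\ v T <= mx.

Definition in_V (R : realType) (delta : nat) (mn mx : R) (n : nat)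
    (v : {set 'I_n} -> R) : Prop :=
  mono_bounded mn mx v /\ delta%:R * mn <= mx /\ mx < (delta.+1)%:R * mn.

Definition in_Vge3 (R : realType) (mn mx : R) (n : nat)
    (v : {set 'I_n} -> R) : Prop :=
  exists delta : nat, (3 <= delta)%N /\ in_V delta mn mx v.

(* A distribution policy: phi n v S s i = share of player i in coalition S
   formed in order s, under characteristic function v on n players. *)
Definition policy (R : realType) :=
  forall n : nat, ({set 'I_n} -> R) -> {set 'I_n} -> seq 'I_n -> 'I_n -> R.

Definition non_wasteful (R : realType) (mn mx : R) (phi : policy R) : Prop :=
  forall (n : nat) (v : {set 'I_n} -> R) (S : {set 'I_n}) (s : seq 'I_n),
    in_Vge3 mn mx v -> perm_eq s (enum S) ->
    \sum_(i in S) phi n v S s i = v S.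

Definition irrevocable (R : realType) (mn mx : R) (phi : policy R) : Prop :=
  forall (n : nat) (v : {set 'I_n} -> R) (pi : seq 'I_n) (S T : {set 'I_n})
         (i : 'I_n),
    in_Vge3 mn mx v -> arrival_order pi ->
    S \subset T -> prefix (restr pi S) (restr pi T) -> i \in S ->
    phi n v S (restr pi S) i <= phi n v T (restr pi T) i.

(* Payoff of arriving player p when joining existing coalition S
   (S = set0 means forming the singleton {p}). *)
Definition gain (R : realType) (phi : policy R) (n : nat)
    (v : {set 'I_n} -> R) (pi : seq 'I_n) (p : 'I_n) (S : {set 'I_n}) : R :=
  phi n v (p |: S) (restr pi (p |: S)) p.

(* A (predetermined) tie-breaking rule: given n, v, pi, the current
   coalition structure C and the arriving player p, it returns the chosen
   option (a coalition of C, or set0 for forming a new singleton). *)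
Definition tiebreak (R : realType) :=
  forall n : nat, ({set 'I_n} -> R) -> seq 'I_n -> seq {set 'I_n} -> 'I_n ->
    {set 'I_n}.

Definition greedy_choice (R : realType) (phi : policy R) (tb : tiebreak R)
    : Prop :=
  forall (n : nat) (v : {set 'I_n} -> R) (pi : seq 'I_n)
         (C : seq {set 'I_n}) (p : 'I_n),
    tb n v pi C p \in set0 :: C /\
    forall X : {set 'I_n}, X \in set0 :: C -> gain phi v pi p X <= gain phi v pi p (tb n v pi C p).

Definition join_step (n : nat) (C : seq {set 'I_n}) (ch : {set 'I_n})
    (p : 'I_n) : seq {set 'I_n} :=
  if ch == set0 then [set p] :: C
  else [seq (if X == ch then p |: X else X) | X <- C].

Definition greedy_outcome (R : realType) (phi : policy R) (tb : tiebreak R)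
    (n : nat) (v : {set 'I_n} -> R) (pi : seq 'I_n) : seq {set 'I_n} :=
  foldl (fun C p => join_step C (tb n v pi C p) p) [::] pi.

Definition SW (R : realType) (n : nat) (v : {set 'I_n} -> R)
    (C : seq {set 'I_n}) : R :=
  \sum_(S <- C) v S.

Definition OPT (R : realType) (n : nat) (v : {set 'I_n} -> R) : R :=
  \big[Num.max/0]_(P : {set {set 'I_n}} | partition P [set: 'I_n])
     \sum_(S in P) v S.

(* Main.v *)
Require Import Defs.
From HB Require Import structures.
From mathcomp Require Import all_boot all_order all_algebra.
From mathcomp Require Import reals.
From mathcomp Require Import lra zify.
Import Order.TTheory GRing.Theory Num.Theory.
Local Open Scope ring_scope.

Lemma restr_perm n (pi : seq 'I_n) (S : {set 'I_n}) :
  arrival_order pi -> perm_eq (restr pi S) (enum S).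
Proof.
move=> h; rewrite /restr.
have -> : enum S = [seq x <- enum 'I_n | x \in S].
  by rewrite enumT /enum_mem.
exact: perm_filter.
Qed.

Definition o0 : 'I_3 := @Ordinal 3 0 isT.
Definition o1 : 'I_3 := @Ordinal 3 1 isT.
Definition o2 : 'I_3 := @Ordinal 3 2 isT.

Lemma arr : arrival_order [:: o0; o1; o2].
Proof.
apply: uniq_perm => //; first exact: enum_uniq.
move=> x; rewrite mem_enum inE.
by case: x => [[|[|[|m]]] Hm].
Qed.

Definition v3 (R : realType) (mn mx : R) : {set 'I_3} -> R :=
  fun S => if #|S| == 0%N then 0 else if #|S| == 3%N then mx else mn.
Arguments v3 {R}.

Theorem theorem2 (R : realType) (mn mx : R)
    (hmn : 0 < mn) (hmnmx : mn <= mx)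
    (hclass : exists delta : nat, (3 <= delta)%N /\
                delta%:R * mn <= mx /\ mx < (delta.+1)%:R * mn)
    (phi : policy R) (tb : tiebreak R)
    (hnw : non_wasteful mn mx phi) (hirr : irrevocable mn mx phi)
    (htb : greedy_choice phi tb) :
  forall eps : R, 0 < eps ->
    exists (n : nat) (v : {set 'I_n} -> R) (pi : seq 'I_n),
      (0 < n)%N /\ in_Vge3 mn mx v /\ arrival_order pi /\
      SW v (greedy_outcome phi tb v pi) / OPT v <= 3%:R * mn / mx + eps.
Proof.
move=> eps heps.
case: hclass => d [hd [hd1 hd2]].
set v := v3 mn mx.
have hV : in_Vge3 mn mx v.
  exists d; split=> //; split; last by [].
  split; first by rewrite /v /v3 cards0.
  move=> S T hS hST.
  have cS : (0 < #|S|)%N by rewrite card_gt0.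
  have cST : (#|S| <= #|T|)%N by apply: subset_leq_card.
  have cT : (#|T| <= 3)%N by rewrite -[X in (_ <= X)%N](card_ord 3) max_card.
  rewrite /v /v3.
  case: (#|S| =P 0%N) => [e|_]; first by rewrite e in cS.
  case: (#|T| =P 0%N) => [e|_]; first by rewrite e in cST; lia.
  case: (#|S| =P 3%N) => [e|_].
    case: (#|T| =P 3%N) => [_|]; first by rewrite !lexx.
    lia.
  case: (#|T| =P 3%N) => _; by rewrite ?lexx.
set pi := [:: o0; o1; o2].
have hpi : arrival_order pi := arr.
have vs1 : forall p : 'I_3, v [set p] = mn by move=> p; rewrite /v /v3 cards1.
have gsingle : forall p, gain phi v pi p set0 = mn.
  move=> p; rewrite /gain setU0.
  have := hnw 3 v [set p] (restr pi [set p]) hV (restr_perm _ _ _ hpi).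
  by rewrite big_set1 vs1.
have gpair : forall x p : 'I_3, x != p ->
    prefix (restr pi [set x]) (restr pi (p |: [set x])) ->
    gain phi v pi p [set x] <= 0.
  move=> x p hxp hpre; rewrite /gain.
  have h1 := hnw 3 v (p |: [set x]) (restr pi (p |: [set x])) hV (restr_perm _ _ _ hpi).
  rewrite big_setU1 ?big_set1 in h1; last by rewrite inE (eq_sym p) hxp.
  have h2 : v (p |: [set x]) = mn.
    by rewrite /v /v3 cardsU1 cards1 inE (eq_sym p) hxp.
  have h3 := hirr 3 v pi [set x] (p |: [set x]) x hV hpi (subsetUr _ _) hpre (set11 x).
  have h4 := hnw 3 v [set x] (restr pi [set x]) hV (restr_perm _ _ _ hpi).
  rewrite big_set1 vs1 in h4.
  have h1' : phi 3 v (p |: [set x]) (restr pi (p |: [set x])) p + phi 3 v (p |: [set x]) (restr pi (p |: [set x])) x = mn := etrans h1 h2.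
  lra.
have step : forall (C : seq {set 'I_3}) (p : 'I_3), (forall X, X \in C -> gain phi v pi p X <= 0) ->
    tb 3 v pi C p = set0.
  move=> C p H; have [hin hmax] := htb 3 v pi C p.
  move: hin; rewrite inE => /orP [/eqP //|hC].
  have h1 := hmax set0 (mem_head set0 C).
  have h2 := H _ hC.
  rewrite gsingle in h1.
  by have := lt_le_trans hmn (le_trans h1 h2); rewrite ltxx.
have e0 : tb 3 v pi [::] o0 = set0 by apply: step.
have e1 : tb 3 v pi [:: [set o0]] o1 = set0.
  apply: step => X; rewrite inE => /eqP ->; apply: gpair => //.
  by rewrite /restr /= !inE.
have e2 : tb 3 v pi [:: [set o1]; [set o0]] o2 = set0.
  apply: step => X; rewrite !inE => /orP [] /eqP ->; apply: gpair => //;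
  by rewrite /restr /= !inE.
have hSW : SW v (greedy_outcome phi tb v pi) = 3%:R * mn.
  rewrite /greedy_outcome /= e0 /join_step eqxx e1 eqxx e2 eqxx.
  rewrite /SW !big_cons big_nil !vs1; lra.
have hOPT : mx <= OPT v.
  rewrite /OPT.
  apply: (bigmax_sup [set setT]).
    rewrite /partition cover1 trivIset1 eqxx inE /=.
    apply/negP => /eqP h; have := in_setT o0; by rewrite -h inE.
  by rewrite big_set1 /v /v3 cardsT card_ord.
exists 3%N, v, pi; split=> //; split=> //; split=> //.
rewrite hSW.
have mxp : 0 < mx by lra.
have hle : 3%:R * mn / OPT v <= 3%:R * mn / mx.
  apply: ler_wpM2l; first by apply: mulr_ge0 => //; lra.
  rewrite lef_pV2 // posrE; lra.
lra.
Qed.
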